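(* Let $G=(V,E)$ be a simple undirected graph, let $S_1,\ldots,S_k\subseteq E$, and let $b\in V$. Assign to every edge $e\in E$ an indeterminate $x_e$, and work in the polynomial ring $\mathbb{F}[x_e : e\in E]$ over a field $\mathbb{F}$ of characteristic $2$. For $l\ge 1$, let $\hat T_b(l)$ be the sum, over all admissible closed walks of length $l$ at $b$, of the weight of the walk, where: - a closed walk of length $l$ at $b$ is a sequence of vertices $b=v_0,v_1,\ldots,v_l=b$ with $\{v_{j-1},v_j\}\in E$ for all $j$ (vertices and edges may repeat), and its weight is $\prod_{j=1}^{l} x_{\{v_{j-1},v_j\}}$; - the walk is admissible if its first edge $\{v_0,v_1\}$ lies in $S_1$, and for every $i\in\{1,\ldots,k\}$ there is exactly one index $j\in\{1,\ldots,l\}$ with $\{v_{j-1},v_j\}\in S_i$. Suppose there exists a simple cycle in $G$ that contains exactly one edge of each $S_i$ and passes through an edge of $S_1$ having $b$ as an endpoint, and let $L$ be the minimum length of such a cycle. Then $\hat T_b(L)$ is a homogeneous polynomial of degree $L$ that is not identically zero, and $\hat T_b(l)$ is identically zero for every $l<L$.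
   Context: A simple cycle of length $L$ is a closed walk $v_0,\ldots,v_L=v_0$ with $v_0,\ldots,v_{L-1}$ pairwise distinct and $L\ge 3$; it ''contains exactly one edge of $S_i$'' if exactly one of its $L$ edges lies in $S_i$. *)

(* Defs.v *)
From HB Require Import structures.
From mathcomp Require Import all_boot all_order all_algebra.
From mathcomp Require Export mpoly.
Set Implicit Arguments. Unset Strict Implicit. Unset Printing Implicit Defensive.
Import GRing.Theory.
Local Open Scope ring_scope.

Section Walks.
Variable T : finType.

Definition edge_of (p : T * T) : {set T} := [set p.1; p.2].

(* edges of the walk b = v_0, v_1, ..., v_l, where w = [:: v_1; ...; v_l] *)
Definition walk_edges (b : T) (w : seq T) : seq {set T} :=
  map edge_of (zip (b :: w) w).

(* edges of the cyclic sequence c = [:: v_0; ...; v_{L-1}] (closing edge included) *)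
Definition cycle_edges (c : seq T) : seq {set T} :=
  if c is x :: s then walk_edges x (rcons s x) else [::].

Definition simple_cycle (E : {set {set T}}) (c : seq T) : Prop :=
  [/\ 3 <= size c, uniq c & all (fun e => e \in E) (cycle_edges c)]%N.

Definition closed_walk (E : {set {set T}}) (b : T) (l : nat) (w : seq T) : bool :=
  [&& size w == l, last b w == b & all (fun e => e \in E) (walk_edges b w)].

(* admissibility w.r.t. S_1, ..., S_k (indexed here by 'I_k.+1, S_1 = S ord0) *)
Definition admissible k (S : 'I_k.+1 -> {set {set T}}) (b : T) (w : seq T) : bool :=
  (nth set0 (walk_edges b w) 0 \in S ord0) &&
  [forall i, count (fun e => e \in S i) (walk_edges b w) == 1%N].

(* The variable x_e, for e a 2-subset of T; variables are indexed by all subsets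
   of T, those not in E are simply never used. *)
Definition xvar (F : ringType) (e : {set T}) : {mpoly F[#|{set T}|]} :=
  'X_(enum_rank e).

Definition walk_weight (F : ringType) (b : T) (w : seq T) : {mpoly F[#|{set T}|]} :=
  \prod_(e <- walk_edges b w) xvar F e.

Definition That (F : ringType) (E : {set {set T}}) k (S : 'I_k.+1 -> {set {set T}})
  (b : T) (l : nat) : {mpoly F[#|{set T}|]} :=
  \sum_(w : l.-tuple T | closed_walk E b l w && admissible S b w) walk_weight F b w.

End Walks.

(* Main.v *)
Require Import Defs.
From HB Require Import structures.
From mathcomp Require Import all_boot all_order all_algebra.
From mathcomp Require Import mpoly.
From mathcomp Require Import zify.
Import GRing.Theory.
Local Open Scope ring_scope.

Set Implicit Arguments.
Unset Strict Implicit.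
Section Comb.
Variable T : finType.
Implicit Types (x y z : T) (s m r : seq T).

Lemma we_cons y x s : walk_edges y (x :: s) = edge_of (y, x) :: walk_edges x s.
Proof. by []. Qed.

Lemma we_nil y : walk_edges y [::] = [::].
Proof. by []. Qed.

Lemma size_we y s : size (walk_edges y s) = size s.
Proof. by elim: s y => //= x s IH y; rewrite IH. Qed.

Lemma we_cat y s1 s2 :
  walk_edges y (s1 ++ s2) = walk_edges y s1 ++ walk_edges (last y s1) s2.
Proof. by elim: s1 y => //= x s IH y; rewrite we_cons IH. Qed.

Lemma we_rcons y s x :
  walk_edges y (rcons s x) = rcons (walk_edges y s) (edge_of (last y s, x)).
Proof. by rewrite -cats1 we_cat cats1. Qed.

Lemma edge_ofC x y : edge_of (x, y) = edge_of (y, x).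
Proof. by rewrite /edge_of /= setUC. Qed.

Lemma we_rev y s :
  walk_edges (last y s) (rev (belast y s)) = rev (walk_edges y s).
Proof.
elim: s y => [|z s IH] y //=.
rewrite we_cons [rev (_ :: walk_edges _ _)]rev_cons -IH /= rev_cons we_rcons; congr rcons.
rewrite edge_ofC; congr (edge_of (_, _)).
case: s {IH} => [|a s] //=.
by rewrite rev_cons last_rcons.
Qed.

Lemma we_rev_closed x m :
  walk_edges x (rcons (rev m) x) = rev (walk_edges x (rcons m x)).
Proof. by rewrite -we_rev last_rcons belast_rcons rev_cons. Qed.

Lemma mem_edge_of p x : (x \in edge_of p) = (x == p.1) || (x == p.2).
Proof. by rewrite !inE. Qed.

Lemma we_mem y s e v : e \in walk_edges y s -> v \in e -> v \in y :: s.
Proof.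
elim: s y => [|z s IH] y //=.
rewrite we_cons inE => /orP[/eqP ->|/IH H] Hv.
  by move: Hv; rewrite mem_edge_of /= => /orP[/eqP->|/eqP->]; rewrite !inE eqxx ?orbT.
by rewrite inE (H Hv) orbT.
Qed.


Fixpoint inv_f (n : nat) (s : seq T) : seq T :=
  match n, s with
  | n'.+1, x :: s' =>
      if x \in s' then
        if rev (take (index x s') s') == take (index x s') s'
        then x :: take (index x s') s' ++ inv_f n' (x :: drop (index x s').+1 s')
        else x :: rev (take (index x s') s') ++ x :: drop (index x s').+1 s'
      else x :: inv_f n' s'
  | _, _ => s
  end.

Fixpoint red_f (n : nat) (s : seq T) : seq T :=
  match n, s with
  | n'.+1, x :: s' =>
      if x \in s' then red_f n' (x :: drop (index x s').+1 s')
      else x :: red_f n' s'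
  | _, _ => s
  end.

Lemma split_idx x s : x \in s ->
  s = take (index x s) s ++ x :: drop (index x s).+1 s.
Proof.
move=> xs; rewrite -{1}(cat_take_drop (index x s) s); congr (_ ++ _).
by rewrite (drop_nth x) ?index_mem // nth_index.
Qed.

Arguments split_idx {x s}.

Lemma notin_take_idx x s : x \notin take (index x s) s.
Proof.
elim: s => //= y s IH; case: eqP => [->|/eqP ne] //=.
by rewrite inE negb_or eq_sym ne.
Qed.

Lemma size_drop_idx x s : (size (drop (index x s).+1 s) <= size s)%N.
Proof. by rewrite size_drop leq_subr. Qed.

Lemma inv_head n x s : exists t, inv_f n (x :: s) = x :: t.
Proof.
case: n => [|n] /=; first by eexists.
by case: ifP => _; [case: ifP => _|]; eexists.
Qed.

Lemma perm_inv n s : perm_eq (inv_f n s) s.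
Proof.
elim: n s => [|n IH] [|x s] //=.
case: ifP => xs; last by rewrite perm_cons IH.
have E := split_idx xs; rewrite [X in perm_eq _ (_ :: X)]E; case: ifP => _.
  rewrite perm_cons perm_cat2l; exact: IH.
by rewrite perm_cons perm_cat2r perm_rev.
Qed.

Lemma size_inv n s : size (inv_f n s) = size s.
Proof. exact/perm_size/perm_inv. Qed.

Lemma inv_we n s y :
  perm_eq (walk_edges y (inv_f n s)) (walk_edges y s) /\
  last y (inv_f n s) = last y s.
Proof.
elim: n s y => [|n IH] [|x s] y //=.
case: ifP => xs; last first.
  by have [P L] := IH s x; split; rewrite /= ?we_cons ?perm_cons.
set m := take _ s; set r := drop _ s.
have E := split_idx xs; rewrite -/m -/r in E.
rewrite [walk_edges y (x :: s)]we_cons.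
clearbody m r; rewrite E.
case: ifP => _.
  rewrite !we_cons perm_cons !we_cat !last_cat perm_cat2l.
  by have [P L] := IH (x :: r) (last x m); rewrite /= last_cat L.
rewrite !we_cons perm_cons -!cat_rcons !we_cat !last_cat !last_rcons perm_cat2r.
by rewrite we_rev_closed perm_rev /= last_cat last_rcons.
Qed.

Lemma inv_invol n s : (size s <= n)%N -> inv_f n (inv_f n s) = s.
Proof.
elim: n s => [|n IH] [|x s] //= Hs.
case: ifP => xs; last first.
  have [t Ht] := inv_head n x s.
  by rewrite /= (perm_mem (perm_inv n s)) xs IH.
set m := take _ s; set r := drop _ s.
have xm : x \notin m by exact: notin_take_idx.
case: ifP => Hp.
  have [t Ht] := inv_head n x r.
  rewrite Ht /= mem_cat inE eqxx orbT index_cat (negbTE xm) /= eqxx addn0.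
  have D : forall u, drop (size m).+1 (m ++ x :: u) = u.
    by move=> u; rewrite -cat_rcons drop_size_cat // size_rcons.
  rewrite take_size_cat // D Hp -Ht IH; last first.
    have Hi : (index x s < size s)%N by rewrite index_mem.
    rewrite /= /r size_drop; move: Hs Hi => /=; lia.
  by rewrite -(split_idx xs).
rewrite /= mem_cat inE eqxx orbT index_cat mem_rev (negbTE xm) /= eqxx addn0.
have D : forall u, drop (size m).+1 (rev m ++ x :: u) = u.
  by move=> u; rewrite -cat_rcons drop_size_cat // size_rcons size_rev.
rewrite size_rev take_size_cat ?size_rev // D revK.
by rewrite eq_sym Hp -(split_idx xs).
Qed.


Definition allsz2 (es : seq {set T}) := all (fun e : {set T} => #|e| == 2%N) es.

Lemma pal_even n x m : (size m <= n)%N -> rev m = m ->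
  allsz2 (walk_edges x (rcons m x)) ->
  forall a, ~~ odd (count a (walk_edges x (rcons m x))).
Proof.
elim: n x m => [|n IH] x m.
  by case: m => //= _ _; rewrite /allsz2 /= andbT /edge_of /= setUid cards1.
case: m => [|z m']; first by move=> _ _; rewrite /allsz2 /= andbT /edge_of /= setUid cards1.
rewrite /= ltnS => Hs.
case/lastP: m' Hs => [|v z'] Hs Hr.
  by move=> _ a; rewrite /= edge_ofC addn0 addnn odd_double.
move: Hr; rewrite rev_cons rev_rcons /= => -[Ez] /rcons_inj [Hv _].
subst z'.
move=> /andP[_ Ha] a.
rewrite -/(walk_edges z (rcons (rcons v z) x)) in Ha *.
rewrite we_rcons last_rcons in Ha *.
rewrite -cats1 count_cat /= addn0 [edge_of (z, x)]edge_ofC addnC -addnA addnn oddD odd_double addbF.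
apply: IH => //; first by move: Hs; rewrite size_rcons; lia.
by move: Ha; rewrite /allsz2 all_rcons => /andP[].
Qed.

Lemma red_sub n s : {subset red_f n s <= s}.
Proof.
elim: n s => [|n IH] [|x s] //= v.
case: ifP => xs.
  move/IH; rewrite !inE => /orP[->//|/mem_drop ->]; by rewrite orbT.
by rewrite !inE => /orP[->//|/IH ->]; rewrite orbT.
Qed.

Lemma size_red n s : (size (red_f n s) <= size s)%N.
Proof.
elim: n s => [|n IH] [|x s] //=.
case: ifP => xs //; last by rewrite ltnS IH.
apply: leq_trans (IH _) _; rewrite /= ltnS size_drop; lia.
Qed.

Lemma red_head n x s : exists t, red_f n (x :: s) = x :: t.
Proof.
elim: n x s => [|n IH] x s /=; first by eexists.
by case: ifP => _; [exact: IH| eexists].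
Qed.

Arguments walk_edges : simpl never.

Lemma fix_red n s y : (size s <= n)%N -> inv_f n s = s -> allsz2 (walk_edges y s) ->
  [/\ uniq (red_f n s), last y (red_f n s) = last y s &
   exists D, perm_eq (walk_edges y s) (walk_edges y (red_f n s) ++ D) /\
             forall a, ~~ odd (count a D)].
Proof.
elim: n s y => [|n IH] [|x s] y //=.
- by move=> _ _ _; split=> //; exists [::].
- by move=> _ _ _; split=> //; exists [::].
rewrite ltnS => Hs.
case: ifP => xs; last first.
  case=> Hinv /andP[_ Ha].
  have [U La [D [PD ED]]] := IH s x Hs Hinv Ha.
  split => //=; last by exists D; rewrite we_cons perm_cons.
  by rewrite U andbT; apply/negP => /red_sub; rewrite xs.
have E := split_idx xs.
set m := take _ s in E *; set r := drop _ s in E *.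
have xm : x \notin m by exact: notin_take_idx.
have Hr : (size (x :: r) <= n)%N.
  have Hi : (index x s < size s)%N by rewrite index_mem.
  by rewrite /= /r size_drop; move: Hs Hi; lia.
clearbody m r; subst s.
case: ifP => Hp; last first.
  by move=> [] /eqP; rewrite eqseq_cat ?size_rev // Hp.
move=> [] /eqP; rewrite eqseq_cat // eqxx /= => /eqP Hinv.
move=> /andP[He Hall].
have : allsz2 (walk_edges x (rcons m x)) && allsz2 (walk_edges x r).
  have H2 : allsz2 (walk_edges x (rcons m x ++ r)) by rewrite cat_rcons.
  by move: H2; rewrite we_cat last_rcons /allsz2 all_cat.
move=> /andP[Am Ar0].
have Ar : allsz2 (walk_edges y (x :: r)) by rewrite we_cons /allsz2 /= He.
rewrite we_cons -cat_rcons we_cat last_rcons.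
have [U La [D [PD ED]]] := IH (x :: r) y Hr Hinv (Ar : allsz2 (walk_edges y (x :: r))).
split => //; first by rewrite La /= last_cat last_rcons.
exists (D ++ walk_edges x (rcons m x)); split; last first.
  move=> a; rewrite count_cat oddD.
  by rewrite (negbTE (ED a)) (negbTE (@pal_even (size m) x m (leqnn _) (eqP Hp) Am a)).
rewrite catA; apply: (@perm_trans _ ((edge_of (y, x) :: walk_edges x r) ++ walk_edges x (rcons m x))).
  by rewrite cat_cons perm_cons perm_catC.
by rewrite perm_cat2r -we_cons.
Qed.

End Comb.
Unset Implicit Arguments.

Lemma sum_invol (I : finType) (R : zmodType) (f : I -> R) (g : I -> I) :
  (forall x : R, x + x = 0) ->
  forall P : pred I,
  (forall i, P i -> P (g i)) -> (forall i, P i -> g (g i) = i) ->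
  (forall i, P i -> g i != i) -> (forall i, P i -> f (g i) = f i) ->
  \sum_(i | P i) f i = 0.
Proof.
move=> h2 P; move: {2}#|P| (leqnn #|P|) => k.
elim: k P => [|k IH] P HP Pg gg gn fg.
  move: HP; rewrite leqn0 => /eqP /card0_eq H.
  by rewrite big_pred0 // => i; have := H i; rewrite !inE.
case: (pickP P) => [x Px|P0]; last by rewrite big_pred0.
rewrite (bigD1 x) //= (bigD1 (g x)) /=; last by rewrite Pg // gn.
rewrite fg // addrA h2 add0r.
pose P' := [pred i | (P i && (i != x)) && (i != g x)].
rewrite (eq_bigl P') //; apply: IH.
- have H1 : (#|P'| <= #|[predD1 P & x]|)%N.
    apply: subset_leq_card; apply/subsetP => i; rewrite !inE.
    by case/andP => /andP[Pi ->]; rewrite /= -topredE /= Pi.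
  move: HP; rewrite (cardD1 x) (_ : x \in P = true) //= => HP.
  by apply: leq_trans H1 _.
- move=> i; rewrite !inE => /andP[/andP[Pi nix] nig]; rewrite Pg //=.
  apply/andP; split; apply/eqP => E.
    by move/eqP: nig; apply; rewrite -E gg.
  by move/eqP: nix; apply; rewrite -(gg i Pi) E gg.
- by move=> i /andP[/andP[Pi _] _]; apply: gg.
- by move=> i /andP[/andP[Pi _] _]; apply: gn.
- by move=> i /andP[/andP[Pi _] _]; apply: fg.
Qed.

Arguments walk_edges : simpl never.

Lemma count1_even (c d : nat) : (c + d = 1)%N -> ~~ odd d -> c = 1%N.
Proof. by case: d => [|[|d]] /=; lia. Qed.

Lemma no_fix (T : finType) (E : {set {set T}}) k (S : 'I_k.+1 -> {set {set T}}) (b : T) (L l : nat) (w : seq T) :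
  (forall e, e \in E -> #|e| = 2%N) ->
  (forall c, [/\ simple_cycle E c,
        forall i, count (fun e => e \in S i) (cycle_edges c) = 1%N &
        exists2 e, e \in cycle_edges c & (e \in S ord0) && (b \in e)] -> (L <= size c)%N) ->
  (1 <= l < L)%N -> closed_walk E b l w -> admissible S b w -> inv_f l w != w.
Proof.
move=> hE Hmin /andP[l1 lL] /and3P[/eqP sw /eqP lw allE] /andP[H0 /forallP Hc].
apply/negP => /eqP Hfix.
have A2 : allsz2 (walk_edges b w).
  by apply/allP => e /(allP allE) /hE ->.
have [U La [D [PD ED]]] := fix_red (eq_leq sw) Hfix A2.
case: w sw H0 lw Hfix allE A2 Hc PD La U => [|v1 w'] sw H0 lw Hfix allE A2 Hc PD La U.
  by move: l1; rewrite -sw.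
have [t Ht] := red_head l v1 w'.
rewrite Ht in U La PD.
set W' := v1 :: t in U La PD Ht.
have e1E : edge_of (b, v1) \in E by move: allE; rewrite we_cons /= => /andP[].
have e1S : edge_of (b, v1) \in S ord0 by move: H0; rewrite we_cons.
have subW : {subset walk_edges b W' <= walk_edges b (v1 :: w')}.
  by move=> e He; rewrite (perm_mem PD) mem_cat He.
have cnt : forall i, count (fun e => e \in S i) (walk_edges b W') = 1%N.
  move=> i; apply: (@count1_even _ (count (fun e => e \in S i) D)); last exact: ED.
  by rewrite -count_cat -(permP PD); apply/eqP; exact: Hc.
have szW : (size W' <= l)%N by rewrite -sw -Ht size_red.
case/lastP E': W' => [|s0 z]; first by [].
have zb : z = b by move: La; rewrite E' last_rcons lw.
subst z.
have Hc3 : (3 <= size (b :: s0))%N.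
  have E'' : v1 :: t = rcons s0 b := E'.
  case: s0 E' E'' => [|z [|z' s']] E' E'' //.
  - by case: E'' => Ev _; move: (hE _ e1E); rewrite Ev /edge_of /= setUid cards1.
  - case: E'' => Ev Et; have := cnt ord0.
    rewrite E' (_ : rcons [:: z] b = [:: z; b]) // we_cons we_cons -Ev.
    by rewrite [edge_of (v1, b)]edge_ofC /= e1S.
have Hmc := Hmin (b :: s0).
have : (L <= size (b :: s0))%N.
  apply: Hmc; split.
  - split => //.
      by move: U; rewrite E' rcons_uniq.
    apply/allP => e; rewrite /cycle_edges -E' => /subW.
    by move/(allP allE).
  - by move=> i; rewrite /cycle_edges -E' cnt.
  - exists (edge_of (b, v1)).
      by rewrite /cycle_edges -E' /W' we_cons mem_head.
    by rewrite e1S /edge_of !inE eqxx.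
move: szW; rewrite E' size_rcons /=; lia.
Qed.

Section Pres.
Variable T : finType.

Lemma inv_closed (E : {set {set T}}) b l n (w : seq T) :
  closed_walk E b l w -> closed_walk E b l (inv_f n w).
Proof.
have [P La] := inv_we n w b.
by rewrite /closed_walk size_inv La (perm_all _ P).
Qed.

Lemma nth0_we (b : T) n w :
  nth set0 (walk_edges b (inv_f n w)) 0 = nth set0 (walk_edges b w) 0.
Proof.
case: w => [|x s]; first by case: n.
by have [t ->] := inv_head n x s; rewrite !we_cons.
Qed.

Lemma inv_adm k (S : 'I_k.+1 -> {set {set T}}) b n (w : seq T) :
  admissible S b w -> admissible S b (inv_f n w).
Proof.
have [P _] := inv_we n w b.
rewrite /admissible nth0_we => /andP[H0 /forallP Hc]; rewrite H0 /=.
by apply/forallP => i; rewrite (permP P) Hc.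
Qed.

Lemma inv_weight (F : fieldType) b n (w : seq T) :
  walk_weight F b (inv_f n w) = walk_weight F b w.
Proof. by have [P _] := inv_we n w b; rewrite /walk_weight (perm_big _ P). Qed.

End Pres.

Lemma vanish (F : fieldType) (T : finType) (E : {set {set T}}) k (S : 'I_k.+1 -> {set {set T}}) (b : T) (L l : nat) :
  2%N \in [pchar F] ->
  (forall e, e \in E -> #|e| = 2%N) ->
  (forall c, [/\ simple_cycle E c,
        forall i, count (fun e => e \in S i) (cycle_edges c) = 1%N &
        exists2 e, e \in cycle_edges c & (e \in S ord0) && (b \in e)] -> (L <= size c)%N) ->
  (1 <= l < L)%N -> That F E S b l = 0.
Proof.
move=> h2 hE Hmin Hl; rewrite /That.
pose g := fun t : l.-tuple T => insubd t (inv_f l t).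
have gE : forall t, val (g t) = inv_f l t.
  by move=> t; rewrite val_insubd size_inv size_tuple eqxx.
apply: (@sum_invol _ _ _ g).
- move=> x; rewrite -mulr2n -mulr_natr -mpolyC_nat (pcharf0 h2).
  by rewrite mpolyC0 mulr0.
- move=> t /andP[Hc Ha]; rewrite gE inv_closed //=; exact: inv_adm.
- move=> t _; apply: val_inj; rewrite !gE inv_invol ?size_tuple //.
- move=> t /andP[Hc Ha]; apply/negP => /eqP /(congr1 val); rewrite gE => /eqP.
  by move=> E0; move: (@no_fix _ E k S b L l t hE Hmin Hl Hc Ha); rewrite E0.
- by move=> t _; rewrite gE inv_weight.
Qed.

Arguments walk_edges : simpl never.

Set Implicit Arguments.
Unset Strict Implicit.
Section C.
Variable T : finType.
Implicit Types (w s q c : seq T).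

Definition mono (b : T) w : 'X_{1..#|{set T}|} :=
  (\sum_(e <- walk_edges b w) U_(enum_rank e))%MM.

Lemma weightE (F : fieldType) b w : walk_weight F b w = 'X_[mono b w].
Proof. by rewrite /walk_weight /xvar /mono mprodXE. Qed.

Lemma mdeg_mono b w : mdeg (mono b w) = size w.
Proof.
rewrite /mono mdeg_sum (eq_bigr (fun _ => 1%N)) => [|e _]; last exact: mdeg1.
by rewrite sum1_size size_we.
Qed.

Lemma mono_cnt b w j : (mono b w) j = count (fun e => enum_rank e == j) (walk_edges b w).
Proof.
rewrite /mono; elim: (walk_edges b w) => [|e es IH].
  by rewrite big_nil mnm0E.
by rewrite big_cons mnmDE mnm1E IH.
Qed.

Lemma mono_cnt' b w j : (mono b w) j = count_mem j (map enum_rank (walk_edges b w)).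
Proof.
rewrite /mono; elim: (walk_edges b w) => [|e es IH].
  by rewrite big_nil mnm0E.
by rewrite big_cons mnmDE mnm1E IH.
Qed.

Lemma mono_perm b w w' : mono b w = mono b w' ->
  perm_eq (walk_edges b w) (walk_edges b w').
Proof.
move=> Em; apply: (perm_map_inj (@enum_rank_inj _)).
apply/allP => j _ /=.
by rewrite -!mono_cnt' Em.
Qed.

Lemma size_ce c : size (cycle_edges c) = size c.
Proof. by case: c => [|x s] //=; rewrite size_we size_rcons. Qed.

Lemma ce_rot1 c : cycle_edges (rot 1 c) = rot 1 (cycle_edges c).
Proof.
case: c => [|x [|y s]] //.
rewrite rot1_cons /cycle_edges /= we_cons rot1_cons.
by rewrite we_rcons last_rcons.
Qed.

Lemma ce_rot i c : (i <= size c)%N -> cycle_edges (rot i c) = rot i (cycle_edges c).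
Proof.
elim: i => [|i IH] Hi; first by rewrite !rot0.
rewrite (rotS Hi) ce_rot1 (IH (ltnW Hi)) -rotS // size_ce //.
Qed.

Lemma nth_rot0 (A : Type) (x0 : A) i (s : seq A) : (i < size s)%N ->
  nth x0 (rot i s) 0 = nth x0 s i.
Proof. by move=> Hi; rewrite /rot nth_cat size_drop subn_gt0 Hi nth_drop addn0. Qed.

Lemma orient (E : {set {set T}}) k (S : 'I_k.+1 -> {set {set T}}) (b : T) (c0 : seq T) :
  [/\ simple_cycle E c0,
        forall i, count (fun e => e \in S i) (cycle_edges c0) = 1%N &
        exists2 e, e \in cycle_edges c0 & (e \in S ord0) && (b \in e)] ->
  exists s, [/\ uniq (b :: s), size (b :: s) = size c0,
     perm_eq (cycle_edges (b :: s)) (cycle_edges c0) &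
     edge_of (b, head b s) \in S ord0].
Proof.
move=> [[c3 cu _] _ [e ein /andP[eS be]]].
set i := index e (cycle_edges c0).
have Hi : (i < size c0)%N by rewrite -size_ce index_mem.
have Hrot := @ce_rot i c0 (ltnW Hi).
have He : nth set0 (cycle_edges (rot i c0)) 0 = e.
  by rewrite Hrot nth_rot0 ?size_ce // nth_index.
have Pr : perm_eq (cycle_edges (rot i c0)) (cycle_edges c0) by rewrite Hrot perm_rot.
have Ur : uniq (rot i c0) by rewrite rot_uniq.
have Sr : size (rot i c0) = size c0 by rewrite size_rot.
case E1 : (rot i c0) He Pr Ur Sr => [|x [|y t]] He Pr Ur Sr.
- by move: c3; rewrite -Sr.
- by move: c3; rewrite -Sr.
have He' : e = edge_of (x, y) by rewrite -He /cycle_edges rcons_cons we_cons.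
move: be; rewrite He' mem_edge_of /= => /orP[/eqP bx|/eqP By].
  subst x; exists (y :: t); split => //.
  by rewrite -He' /=.
subst y; exists (x :: rev t); split.
- have Pe : perm_eq (b :: x :: rev t) (x :: b :: t).
    rewrite -[b :: x :: rev t]/([:: b] ++ [:: x] ++ rev t).
    by rewrite perm_catCA /= !perm_cons perm_rev.
  exact: (etrans (perm_uniq Pe) Ur).
- by rewrite -Sr /= size_rev.
- apply: perm_trans Pr.
  rewrite /cycle_edges /= !we_cons edge_ofC perm_cons.
  have := we_rev b (rcons t x); rewrite last_rcons belast_rcons rev_cons => ->.
  by rewrite perm_rev.
- by rewrite /= edge_ofC -He'.
Qed.

Lemma uniq_walk q y W : uniq (y :: q) -> perm_eq (walk_edges y W) (walk_edges y q) ->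
  allsz2 (walk_edges y W) -> W = q.
Proof.
elim: q y W => [|z q IH] y W.
  by move=> _ /perm_size; rewrite size_we /=; case: W.
case: W => [|v W]; first by move=> _ /perm_size; rewrite !size_we.
move=> Hu P A.
have Ee : edge_of (y, v) = edge_of (y, z).
  have : edge_of (y, v) \in walk_edges y (z :: q) by rewrite -(perm_mem P) we_cons mem_head.
  rewrite we_cons inE => /orP[/eqP //|H].
  have := we_mem H (_ : y \in edge_of (y, v)); rewrite !inE eqxx => /(_ isT).
  by move: Hu; rewrite /= inE => /andP[/negP].
have vz : v = z.
  have : v \in edge_of (y, z) by rewrite -Ee !inE eqxx orbT.
  rewrite mem_edge_of /= => /orP[/eqP vy|/eqP -> //].
  by move: A; rewrite we_cons /allsz2 /= vy /edge_of /= setUid cards1.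
subst v; congr cons; apply: (IH z).
- by case/andP: Hu.
- by move: P; rewrite !we_cons perm_cons.
- move: A; rewrite we_cons /allsz2 /=.  by case/andP.
Qed.

End C.
Unset Implicit Arguments.

Arguments walk_edges : simpl never.

Lemma That_homog (F : fieldType) (T : finType) (E : {set {set T}}) k
  (S : 'I_k.+1 -> {set {set T}}) (b : T) (l : nat) : That F E S b l \is l.-homog.
Proof.
rewrite /That; apply: rpred_sum => t _.
rewrite weightE dhomogX; apply/eqP; rewrite -[RHS](size_tuple t); exact: mdeg_mono.
Qed.

Lemma That_nz (F : fieldType) (T : finType) (E : {set {set T}}) (k : nat)
  (S : 'I_k.+1 -> {set {set T}}) (b : T) (L : nat) (c0 : seq T) :
  (forall e, e \in E -> #|e| = 2%N) ->
  [/\ simple_cycle E c0,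
        forall i, count (fun e => e \in S i) (cycle_edges c0) = 1%N &
        exists2 e, e \in cycle_edges c0 & (e \in S ord0) && (b \in e)] ->
  size c0 = L -> That F E S b L != 0.
Proof.
move=> hE Hc0 Hsz.
have [s [Us Ss Ps S0]] := orient Hc0.
case: Hc0 => [[c3 cu cE] Hcnt _].
case: s Us Ss Ps S0 => [|u1 s'] Us Ss Ps S0; first by move: c3; rewrite -Ss.
set w0 := u1 :: rcons s' b.
have sw0 : size w0 == L by rewrite -Hsz -Ss /= size_rcons.
have Pw : perm_eq (walk_edges b w0) (cycle_edges c0) by exact: Ps.
have Cw0 : closed_walk E b L w0.
  by rewrite /closed_walk sw0 /w0 -rcons_cons last_rcons eqxx (perm_all _ Pw).
have cnt0 : forall i, count (fun e => e \in S i) (walk_edges b w0) = 1%N.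
  by move=> i; rewrite (permP Pw) Hcnt.
have Aw0 : admissible S b w0.
  rewrite /admissible; apply/andP; split; first by rewrite /w0 we_cons.
  by apply/forallP => i; rewrite cnt0.
set t0 : L.-tuple T := Tuple sw0.
have key : forall t : L.-tuple T, closed_walk E b L t -> admissible S b t ->
    mono b t = mono b w0 -> t = t0.
  move=> t Ct At Em; apply: val_inj => /=.
  have Pm := mono_perm Em.
  case/and3P: Ct => /eqP st _ allE.
  case/andP: At => H0 _.
  case: (tval t) st Pm allE H0 => [|v1 w'] st Pm allE H0.
    by move: c3; rewrite Hsz -st.
  rewrite we_cons /= in H0.
  have e1E : edge_of (b, v1) \in E by move: allE; rewrite we_cons /= => /andP[].
  have Ee : edge_of (b, v1) = edge_of (b, u1).
    have : edge_of (b, v1) \in walk_edges b w0 by rewrite -(perm_mem Pm) we_cons mem_head.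
    rewrite /w0 we_cons inE => /orP[/eqP //|H].
    have := cnt0 ord0; rewrite /w0 we_cons /= S0 /= add1n.
    move=> [] /eqP; rewrite -leqn0 leqNgt -has_count => /negP H1; exfalso; apply: H1.
    by apply/hasP; exists (edge_of (b, v1)).
  have vu : v1 = u1.
    have : v1 \in edge_of (b, u1) by rewrite -Ee !inE eqxx orbT.
    rewrite mem_edge_of /= => /orP[/eqP vb|/eqP -> //].
    by exfalso; move: (hE _ e1E); rewrite vb /edge_of /= setUid cards1.
  subst v1; congr cons; apply: (uniq_walk (y := u1)).
  - by rewrite -rcons_cons rcons_uniq.
  - by move: Pm; rewrite /w0 !we_cons perm_cons.
  - by apply/allP => e He; apply/eqP/hE; move: allE; rewrite we_cons /= => /andP[_ /allP]; apply.
apply/negP => /eqP H0; have := congr1 (mcoeff (mono b w0)) H0.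
rewrite mcoeff0 /That raddf_sum.
rewrite (eq_bigr (fun t => (t == t0)%:R)) => [|t /andP[Ct At]]; last first.
  rewrite weightE /= mcoeffX.
  have -> : (mono b t == mono b w0) = (t == t0) => //.
  by apply/idP/idP => [/eqP Em|/eqP ->] //; apply/eqP; exact: key.
rewrite (bigD1 t0) ?eqxx; last by rewrite Cw0 Aw0.
rewrite big1 => [|t /andP[_ nt]]; last by rewrite (negbTE nt).
by rewrite /= addr0 => /eqP; rewrite oner_eq0.
Qed.

Theorem mainTheorem2 (F : fieldType) (T : finType) (E : {set {set T}}) (k : nat)
  (S : 'I_k.+1 -> {set {set T}}) (b : T) (L : nat) :
  2%N \in [pchar F] ->
  (forall e, e \in E -> #|e| = 2%N) ->
  (forall i, S i \subset E) ->
  let good (c : seq T) :=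
    [/\ simple_cycle E c,
        forall i, count (fun e => e \in S i) (cycle_edges c) = 1%N &
        exists2 e, e \in cycle_edges c & (e \in S ord0) && (b \in e)] in
  (exists2 c, good c & size c = L) ->
  (forall c, good c -> (L <= size c)%N) ->
  [/\ That F E S b L \is L.-homog, That F E S b L != 0 &
      forall l, (1 <= l < L)%N -> That F E S b l = 0].
Proof.
move=> h2 hE hS good [c0 Hc0 Hsz] Hmin; split.
- exact: That_homog.
- exact: (@That_nz F T E k S b L c0 hE Hc0 Hsz).
- by move=> l Hl; exact: (@vanish F T E k S b L l h2 hE Hmin Hl).
Qed.
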